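(* Let $G$ be a finite abelian group and let $f$ be an automorphism of the monoid $\mathcal{P}_{0}(G)$. Then $f$ maps every $2$-element set in $\mathcal{P}_{0}(G)$ to a $2$-element set.
   Context: For an additively written finite abelian group $G$, $\mathcal{P}_{0}(G)$ is the monoid of all subsets of $G$ containing $0$, with setwise addition $X+Y=\{x+y : x\in X, y\in Y\}$ and identity $\{0\}$. *)

(* Defs.v *)
From HB Require Import structures.
From mathcomp Require Import all_boot all_algebra.
Set Implicit Arguments. Unset Strict Implicit. Unset Printing Implicit Defensive.
Import GRing.Theory.
Local Open Scope ring_scope.

Definition sumset (G : finZmodType) (X Y : {set G}) : {set G} :=
  [set x + y | x in X, y in Y].

Definition P0 (G : finZmodType) := {X : {set G} | (0 : G) \in X}.

Lemma sumset_P0 (G : finZmodType) (X Y : P0 G) : (0 : G) \in sumset (val X) (val Y).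
Proof.
have h : (0 : G) = 0 + 0 by rewrite addr0.
rewrite /sumset {1}h; exact: (imset2_f _ (valP X) (valP Y)).
Qed.

Definition P0add (G : finZmodType) (X Y : P0 G) : P0 G :=
  exist _ (sumset (val X) (val Y)) (sumset_P0 X Y).

Lemma set10 (G : finZmodType) : (0 : G) \in [set (0 : G)].
Proof. by rewrite in_set1. Qed.

Definition P0unit (G : finZmodType) : P0 G := exist _ [set (0 : G)] (set10 G).

Definition P0_automorphism (G : finZmodType) (f : P0 G -> P0 G) : Prop :=
  [/\ bijective f,
      (forall X Y : P0 G, f (P0add X Y) = P0add (f X) (f Y)) &
      f (P0unit G) = P0unit G].

(* Main.v *)
Require Import Defs.
From mathcomp Require Import all_boot all_algebra.
From mathcomp Require Import zify.
Set Implicit Arguments. Unset Strict Implicit. Unset Printing Implicit Defensive.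
Import GRing.Theory.

Section S.
Variable G : finZmodType.
Implicit Types A B C : {set G}.
Implicit Types X Y Z : P0 G.
Implicit Types K : {set G}.

Lemma mem_sumset A B u v : u \in A -> v \in B -> (u + v)%R \in sumset A B.
Proof. move=> hu hv; exact: imset2_f. Qed.

Lemma sumsetP A B x :
  reflect (exists u v, [/\ u \in A, v \in B & x = (u + v)%R]) (x \in sumset A B).
Proof.
apply: (iffP imset2P) => [[u v hu hv ->]|[u [v [hu hv ->]]]];
  [by exists u, v | by exists u v].
Qed.

Lemma sumsetC A B : sumset A B = sumset B A.
Proof.
apply/setP=> x; apply/sumsetP/sumsetP => -[u [v [hu hv ->]]];
  exists v, u; by rewrite addrC.
Qed.

Lemma sumsetA A B C : sumset A (sumset B C) = sumset (sumset A B) C.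
Proof.
apply/setP=> x; apply/sumsetP/sumsetP.
- move=> [u [w [hu /sumsetP [v [z [hv hz ->]]] ->]]].
  exists (u + v)%R, z; split => //; [exact: mem_sumset | by rewrite addrA].
- move=> [w [z [/sumsetP [u [v [hu hv ->]]] hz ->]]].
  exists u, (v + z)%R; split => //; [exact: mem_sumset | by rewrite addrA].
Qed.

Lemma sumset_subr A B : (0 : G)%R \in A -> B \subset sumset A B.
Proof. move=> h0; apply/subsetP => v hv; rewrite -[v]add0r; exact: mem_sumset. Qed.

Lemma P0addC X Y : P0add X Y = P0add Y X.
Proof. apply: val_inj; exact: sumsetC. Qed.
Lemma P0addA X Y Z : P0add X (P0add Y Z) = P0add (P0add X Y) Z.
Proof. apply: val_inj; exact: sumsetA. Qed.

Definition it k X := iter k (P0add X) X.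

Lemma itS k X : it k.+1 X = P0add X (it k X). Proof. by []. Qed.

Lemma it_sub k X : val (it k X) \subset val (it k.+1 X).
Proof. rewrite itS; exact: (sumset_subr _ (valP X)). Qed.

Lemma it_mono j k X : j <= k -> val (it j X) \subset val (it k X).
Proof.
move/subnK <-; elim: (k - j) => [|n IH] //.
rewrite ?addSn; apply: (subset_trans IH); exact: it_sub.
Qed.

Lemma it_stab j X : it j.+1 X = it j X -> forall k, j <= k -> it k X = it j X.
Proof.
move=> h k /subnK <-; elim: (k - j) => [|n IH] //.
rewrite ?addSn itS IH; exact h.
Qed.

Lemma it_grow k X : (forall j, j < k -> it j.+1 X != it j X) ->
  #|val X| + k <= #|val (it k X)|.
Proof.
elim: k => [|k IH] h; first by rewrite addn0.
have h1 := IH (fun j hj => h j (ltnW hj)).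
have hp : val (it k X) \proper val (it k.+1 X).
  rewrite properEneq it_sub andbT; apply: contra (h k (ltnSn k)) => /eqP e.
  by apply/eqP/val_inj; rewrite e.
rewrite addnS; exact: leq_ltn_trans h1 (proper_card hp).
Qed.

Lemma it_chain k N X : k <= N -> it k X != it N X -> #|val X| + k <= #|val (it k X)|.
Proof.
move=> hkN hne; apply: it_grow => j hj; apply/eqP => e.
move: hne; rewrite (it_stab e (ltnW hj)) (it_stab e (leq_trans (ltnW hj) hkN)).
by rewrite eqxx.
Qed.

Lemma it_fix X : it #|G|.+1 X = it #|G| X.
Proof.
have [j [hj e]] : exists j, j < #|G| /\ it j.+1 X = it j X.
  case: (boolP [exists j : 'I_#|G|, it j.+1 X == it j X]) =>
     [/existsP [j /eqP e]|/existsPn hn]; first by exists j.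
  have h1 : #|val (it #|G| X)| <= #|G| := max_card _.
  have h0 : 0 < #|val X| by apply/card_gt0P; exists 0%R; exact: (valP X).
  have h2 : #|val X| + #|G| <= #|val (it #|G| X)|.
    by apply: it_grow => j hj; exact: (hn (Ordinal hj)).
  lia.
rewrite (it_stab e (k:=#|G|.+1)) ?(it_stab e (k:=#|G|)) //; first exact: ltnW.
exact: leqW (ltnW hj).
Qed.

Definition H X := it #|G| X.

Lemma it_absorb X k : P0add (it k X) (H X) = H X.
Proof.
have e0 : P0add X (H X) = H X := it_fix X.
elim: k => [|k IH]; first exact e0.
by rewrite itS -P0addA IH.
Qed.

Lemma sub_H X Z : (val Z \subset val (H X)) = (P0add Z (H X) == H X).
Proof.
have hH : sumset (val (H X)) (val (H X)) = val (H X) := congr1 val (it_absorb X #|G|).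
apply/idP/eqP.
- move=> hs; apply: val_inj; apply/eqP; rewrite /= eqEsubset sumset_subr ?(valP Z) //.
  rewrite andbT; apply/subsetP => x /sumsetP [u [v [hu hv ->]]].
  have := mem_sumset (subsetP hs u hu) hv; by rewrite hH.
- move=> e; apply/subsetP => z hz; rewrite -e /= -[z]addr0.
  apply: mem_sumset => //; exact: (valP (H X)).
Qed.

Definition cnt (K : {set G}) := #|[set Z : P0 G | val Z \subset K]|.

Lemma cnt_eq K : (0 : G)%R \in K -> cnt K = 2 ^ #|K :\ 0%R|.
Proof.
move=> hK; rewrite /cnt.
pose g (A : {set G}) : P0 G := exist _ (0%R |: A) (setU11 0%R A).
have -> : [set Z : P0 G | val Z \subset K] = g @: powerset (K :\ 0%R).
  apply/setP => Z; rewrite inE; apply/idP/imsetP.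
  - move=> hs; exists (val Z :\ 0%R); first by rewrite powersetE setSD.
    by apply: val_inj => /=; rewrite setD1K // (valP Z).
  - move=> [A hA ->] /=; rewrite powersetE in hA.
    rewrite subUset sub1set hK /=; exact: subset_trans hA (subsetDl _ _).
rewrite card_in_imset ?card_powerset //.
move=> A B hA hB /(congr1 val) /= e.
rewrite powersetE in hA; rewrite powersetE in hB.
have nA : 0%R \notin A by apply/negP => /(subsetP hA); rewrite !inE eqxx.
have nB : 0%R \notin B by apply/negP => /(subsetP hB); rewrite !inE eqxx.
by rewrite -(setU1K nA) -(setU1K nB) e.
Qed.

Lemma cnt_inj (K1 K2 : {set G}) : (0 : G)%R \in K1 -> (0 : G)%R \in K2 ->
  cnt K1 = cnt K2 -> #|K1| = #|K2|.
Proof.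
move=> h1 h2; rewrite !cnt_eq // => /expnI e.
rewrite (cardsD1 0%R K1) (cardsD1 0%R K2) h1 h2 e //.
Qed.

End S.

Theorem lemma2p3 (G : finZmodType) (f : P0 G -> P0 G) :
  P0_automorphism f ->
  forall X : P0 G, #|val X| = 2 -> #|val (f X)| = 2.
Proof.
move=> [fbij fadd f1] X hX.
have finj := bij_inj fbij.
have f_it : forall k Z, f (it k Z) = it k (f Z).
  by move=> k Z; elim: k => [|k IH] //; rewrite !itS fadd IH.
set Y := f X.
have hHY : H Y = f (H X) by rewrite /H f_it.
have hsz : #|val (H Y)| = #|val (H X)|.
  apply: cnt_inj; try exact: (valP (H Y)); try exact: (valP (H X)).
  rewrite /cnt -[RHS](card_imset _ finj); apply: eq_card => Z.
  case: fbij => g gK Kg.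
  rewrite -[Z]Kg mem_imset // !inE !sub_H hHY -fadd.
  by rewrite (inj_eq finj).
have hYH : val Y \subset val (H Y) := @it_mono G 0 #|G| Y (leq0n _).
have hY2 : 2 <= #|val Y|.
  rewrite ltnNge; apply/negP => hle.
  have e : [set (0 : G)%R] == val Y.
    by rewrite eqEcard sub1set (valP Y) cards1.
  have eY : Y = P0unit G by apply: val_inj; rewrite -(eqP e).
  have : X = P0unit G by apply: finj; rewrite f1.
  by move=> eX; move: hX; rewrite eX /= cards1.
have [a ha] : exists a, val X :\ 0%R = [set a].
  apply/cards1P; have := cardsD1 0%R (val X); rewrite (valP X) hX /=.
  by rewrite add1n => -[] <-.
have hXa : forall x, x \in val X -> x = 0%R \/ x = a.
  move=> x hx; case: (eqVneq x 0%R) => [->|nx]; first by left.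
  right; apply/set1P; rewrite -ha !inE nx; exact: hx.
have hbound : forall k x, x \in val (it k X) -> exists2 i, i <= k.+1 & x = (a *+ i)%R.
  elim=> [|k IH] x.
  - move=> /hXa [->|->]; [by exists 0 | by exists 1].
  - move=> /sumsetP [u [v [hu hv ->]]]; have [i hi ->] := IH v hv.
    case: (hXa u hu) => ->; first by exists i; [exact: leqW | rewrite add0r].
    by exists i.+1; [ | rewrite mulrS].
have hcard : forall k, #|val (it k X)| <= k.+2.
  move=> k.
  have hs : {subset val (it k X) <= [seq (a *+ i)%R | i <- iota 0 k.+2]}.
    move=> x /hbound [i hi ->]; apply/mapP; exists i => //; rewrite mem_iota; lia.
  apply: leq_trans (subset_leq_card (introT subsetP hs)) _.
  by apply: leq_trans (card_size _) _; rewrite size_map size_iota.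
have hYle : #|val Y| <= #|val (H Y)| := subset_leq_card hYH.
case: (leqP #|val (H X)| 2) => hHX; first lia.
set k := #|val (H X)| - 3.
have hkG : k <= #|G|.
  by rewrite /k; apply: leq_trans (leq_subr _ _) (max_card _).
have hk : it k X != H X.
  apply/eqP => e; have := hcard k; rewrite e /k; lia.
have hkY : it k Y != H Y by rewrite /Y hHY -f_it (inj_eq finj).
have hc := it_chain hkG hkY.
have hp : val (it k Y) \proper val (H Y).
  rewrite properEneq it_mono // andbT; apply: contra hkY => /eqP e.
  by apply/eqP/val_inj.
have := proper_card hp.
lia.
Qed.
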